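(* Let $\mu,\epsilon,\delta>0$ and let $f:\mathbb{R}^d\to\mathbb{R}$ be differentiable, $\mu$-strongly convex, with $(1/\epsilon)$-Lipschitz gradient and minimizer $x^\ast$. Let $(A_k)_{k\ge0}$ be a nondecreasing sequence of positive numbers, $\tau_k=(A_{k+1}-A_k)/A_{k+1}$, and $E_k=A_k\big(\frac\mu2\|x^\ast-z_k\|^2+f(y_k)-f(x^\ast)\big)$. Suppose that for all $k$ $$x_k=\frac{\tau_k}{1+\tau_k}z_k+\frac1{1+\tau_k}y_k,\qquad z_{k+1}-z_k=\tau_k\Big(x_k-z_k-\frac1\mu\nabla f(x_k)\Big),\qquad y_{k+1}=x_k-\epsilon\nabla f(x_k).$$ Then $$\frac{E_{k+1}-E_k}{\delta}\le\frac{A_{k+1}}{\delta}\Big(\frac{\tau_k^2}{2\mu}-\frac\epsilon2\Big)\|\nabla f(x_k)\|^2+\frac{A_{k+1}}{\delta}\Big(\frac{\tau_k}{2\epsilon}-\frac{\mu}{2\tau_k}\Big)\|x_k-y_k\|^2.$$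
   Context: $\|\cdot\|$ is the Euclidean norm; $\mu$-strong convexity means $f(y)\ge f(x)+\langle\nabla f(x),y-x\rangle+\frac\mu2\|y-x\|^2$. *)

(* Defs.v *)
From HB Require Import structures.
From mathcomp Require Import all_boot all_order all_algebra.
From mathcomp Require Import all_classical all_reals all_analysis.
Set Implicit Arguments. Unset Strict Implicit. Unset Printing Implicit Defensive.
Import Order.TTheory GRing.Theory Num.Theory.
Import numFieldNormedType.Exports.
Local Open Scope ring_scope.

Definition dotv (R : realType) (d : nat) (u v : 'rV[R]_d) : R :=
  \sum_(i < d) u ord0 i * v ord0 i.
Definition enorm (R : realType) (d : nat) (u : 'rV[R]_d) : R :=
  Num.sqrt (dotv u u).

Definition is_gradient (R : realType) (d : nat) (f : 'rV[R]_d -> R^o)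
  (g : 'rV[R]_d -> 'rV[R]_d) : Prop :=
  forall x, differentiable f x /\ forall v, 'd f x v = dotv (g x) v.

Definition strongly_convex (R : realType) (d : nat) (mu : R)
  (f : 'rV[R]_d -> R) (g : 'rV[R]_d -> 'rV[R]_d) : Prop :=
  forall x y, f y >= f x + dotv (g x) (y - x) + mu / 2 * enorm (y - x) ^+ 2.

Definition lipschitz_grad (R : realType) (d : nat) (L : R)
  (g : 'rV[R]_d -> 'rV[R]_d) : Prop :=
  forall x y, enorm (g x - g y) <= L * enorm (x - y).

Definition is_minimizer (R : realType) (d : nat) (f : 'rV[R]_d -> R) (xs : 'rV[R]_d) : Prop :=
  forall x, f xs <= f x.

(* Main.v *)
Require Import Defs.
From HB Require Import structures.
From mathcomp Require Import all_boot all_order all_algebra.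
From mathcomp Require Import all_classical all_reals all_analysis.
From mathcomp Require Import ring lra.
Import Order.TTheory GRing.Theory Num.Theory.
Import numFieldNormedType.Exports.
Local Open Scope ring_scope.

Set Implicit Arguments. Unset Strict Implicit.


Section Dot.
Variables (R : realType) (d : nat).
Implicit Types (u v w : 'rV[R]_d) (a : R).

Lemma dotvC u v : dotv u v = dotv v u.
Proof. by apply: eq_bigr => i _; rewrite mulrC. Qed.
Lemma dotvDl u v w : dotv (u + v) w = dotv u w + dotv v w.
Proof. by rewrite /dotv -big_split; apply: eq_bigr => i _; rewrite mxE mulrDl. Qed.
Lemma dotvZl a u w : dotv (a *: u) w = a * dotv u w.
Proof. by rewrite /dotv mulr_sumr; apply: eq_bigr => i _; rewrite mxE mulrA. Qed.
Lemma dotvNl u w : dotv (- u) w = - dotv u w.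
Proof. by rewrite -scaleN1r dotvZl mulN1r. Qed.
Lemma dotvBl u v w : dotv (u - v) w = dotv u w - dotv v w.
Proof. by rewrite dotvDl dotvNl. Qed.
Lemma dotvDr u v w : dotv w (u + v) = dotv w u + dotv w v.
Proof. by rewrite dotvC dotvDl !(dotvC w). Qed.
Lemma dotvZr a u w : dotv w (a *: u) = a * dotv w u.
Proof. by rewrite dotvC dotvZl dotvC. Qed.
Lemma dotvNr u w : dotv w (- u) = - dotv w u.
Proof. by rewrite dotvC dotvNl dotvC. Qed.
Lemma dotvBr u v w : dotv w (u - v) = dotv w u - dotv w v.
Proof. by rewrite dotvDr dotvNr. Qed.
Lemma dotv_ge0 u : 0 <= dotv u u.
Proof. by apply: sumr_ge0 => i _; rewrite -expr2 sqr_ge0. Qed.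
Lemma enorm_sq u : enorm u ^+ 2 = dotv u u.
Proof. by rewrite /enorm sqr_sqrtr // dotv_ge0. Qed.
Lemma enorm_ge0 u : 0 <= enorm u.
Proof. exact: sqrtr_ge0. Qed.

Lemma amgm s u v : 2 * s * dotv u v <= s ^+ 2 * dotv u u + dotv v v.
Proof.
have := dotv_ge0 (s *: u - v).
rewrite !(dotvBl, dotvBr, dotvZl, dotvZr) (dotvC v u). lra.
Qed.

Lemma dot_bound K u h : 0 <= K -> dotv u u <= K ^+ 2 * dotv h h ->
  dotv u h <= K * dotv h h.
Proof.
move=> K0 Hu; have hh0 := dotv_ge0 h.
have key : forall s, 0 < s -> 2 * s * dotv u h <= (s * K) ^+ 2 * dotv h h + dotv h h.
  move=> s s0; apply: le_trans (amgm s u h) _; rewrite lerD2r exprMn.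
  have := ler_wpM2l (sqr_ge0 s) Hu; lra.
have [Kp|] := ltrP 0 K.
  have Ki : 0 < K^-1 by rewrite invr_gt0.
  have := ler_wpM2l (ltW Kp) (key _ Ki).
  have -> : K * (2 * K^-1 * dotv u h) = 2 * dotv u h by field; rewrite gt_eqF.
  rewrite mulVf ?gt_eqF // expr1n mul1r. lra.
move=> K0'; have K00 : K = 0 by apply/eqP; rewrite eq_le K0' K0.
rewrite K00 in key *; rewrite mul0r leNgt; apply/negP => pos.
have := key 1 ltr01; rewrite mulr0 expr0n /= mul0r add0r mulr1 => H1.
have hpos : 0 < dotv h h by lra.
have := key (dotv h h / dotv u h) (divr_gt0 hpos pos).
rewrite mulr0 expr0n /= mul0r add0r -mulrA divfK ?gt_eqF //. lra.
Qed.
End Dot.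



Section Descent.
Variables (R : realType) (d : nat) (mu L : R) (f : 'rV[R]_d -> R) (g : 'rV[R]_d -> 'rV[R]_d).
Hypotheses (mu0 : 0 <= mu) (L0 : 0 <= L) (hc : strongly_convex mu f g) (hl : lipschitz_grad L g).

Lemma lip_sq a b : dotv (g a - g b) (g a - g b) <= L ^+ 2 * dotv (a - b) (a - b).
Proof.
rewrite -!enorm_sq -exprMn expr2 [X in _ <= X]expr2.
by apply: ler_pM; rewrite ?enorm_ge0 //; apply: hl.
Qed.

Lemma conv0 a b : f a + dotv (g a) (b - a) <= f b.
Proof.
apply: le_trans (hc a b); rewrite lerDl; apply: mulr_ge0; last by rewrite sqr_ge0.
by apply: divr_ge0.
Qed.

Lemma grad_mono (h u : 'rV[R]_d) : mu * dotv h h <= L * dotv h h.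
Proof.
have h1 := hc u (u + h); have h2 := hc (u + h) u.
have e1 : u + h - u = h by rewrite addrC addKr.
have e2 : u - (u + h) = - h by rewrite opprD addrA subrr add0r.
rewrite e1 ?e2 !enorm_sq ?dotvNl ?dotvNr ?opprK in h1 h2.
have hb : dotv (g (u + h) - g u) h <= L * dotv h h.
  apply: dot_bound => //; have := lip_sq (u + h) u; by rewrite e1.
rewrite dotvBl in hb. lra.
Qed.

Lemma descent_n u h (n : nat) : (0 < n)%N -> forall m : nat,
  f (u + (m%:R / n%:R) *: h) - f u <=
    m%:R / n%:R * dotv (g u) h + L * dotv h h * (m%:R * (m%:R + 1)) / (2 * n%:R ^+ 2).
Proof.
move=> n0; have nR : (n%:R : R) != 0 by rewrite pnatr_eq0 -lt0n.
have nR0 : (0 : R) < n%:R by rewrite ltr0n.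
elim=> [|m IH].
  by rewrite !mul0r scale0r addr0 subrr mulr0 mul0r addr0.
set p := u + (m.+1%:R / n%:R) *: h.
have e1 : u + (m%:R / n%:R) *: h - p = (- (1 / n%:R)) *: h.
  by apply/rowP => j; rewrite /p !mxE -natr1; field.
have e2 : p - u = (m.+1%:R / n%:R) *: h.
  by apply/rowP => j; rewrite /p !mxE; ring.
have hcv := conv0 p (u + (m%:R / n%:R) *: h).
rewrite e1 dotvZr in hcv.
have hb : dotv (g p - g u) h <= (L * (m.+1%:R / n%:R)) * dotv h h.
  apply: dot_bound; first by apply: mulr_ge0 => //; apply: divr_ge0.
  apply: le_trans (lip_sq p u) _; rewrite e2 dotvZl dotvZr.
  lra.
rewrite dotvBl in hb.
have hdg : 0 <= 1 / (n%:R : R) by rewrite divr_ge0 // ler0n.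
have hb' := ler_wpM2l hdg hb.
rewrite -natr1 in hb' *.
have E : m%:R / n%:R * dotv (g u) h + L * dotv h h * (m%:R * (m%:R + 1)) / (2 * n%:R ^+ 2)
   + 1 / n%:R * (L * ((m%:R + 1) / n%:R) * dotv h h + dotv (g u) h)
   = (m%:R + 1) / n%:R * dotv (g u) h + L * dotv h h * ((m%:R + 1) * (m%:R + 1 + 1)) / (2 * (n%:R : R) ^+ 2).
  by field.
rewrite -E.
lra.
Qed.

Lemma descent u h : f (u + h) <= f u + dotv (g u) h + L / 2 * dotv h h.
Proof.
have hh0 := dotv_ge0 h.
set C := L / 2 * dotv h h.
have C0 : 0 <= C by apply: mulr_ge0 => //; apply: divr_ge0.
rewrite leNgt; apply/negP => H.
set e := f (u + h) - (f u + dotv (g u) h + C).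
have e0 : 0 < e by rewrite /e subr_gt0.
have be0 : 0 <= C / e by apply: divr_ge0 => //; apply: ltW.
set N := Num.Def.archi_bound (C / e).
have hN : C / e < N.+1%:R.
  apply: lt_le_trans (archi_boundP be0) _; by rewrite ler_nat.
have nR0 : (0 : R) < N.+1%:R by rewrite ltr0n.
have hn := descent_n u h (ltn0Sn N) N.+1.
rewrite divff ?gt_eqF // scale1r in hn.
have eq : L * dotv h h * (N.+1%:R * (N.+1%:R + 1)) / (2 * N.+1%:R ^+ 2)
   = C + C / N.+1%:R by rewrite /C; field; rewrite gt_eqF.
rewrite eq mul1r in hn.
have : C / N.+1%:R < e.
  by rewrite ltr_pdivrMr // mulrC -ltr_pdivrMr.
rewrite /e in e0 *. move=> hlt; move: hn hlt; set c := C / _; set F := f (u + h); clearbody e N C c; move=> *; lra.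
Qed.
End Descent.



Theorem corollary1 (R : realType) (d : nat) (mu eps delta : R)
  (f : 'rV[R]_d -> R^o) (g : 'rV[R]_d -> 'rV[R]_d) (xs : 'rV[R]_d)
  (A : nat -> R) (x y z : nat -> 'rV[R]_d) :
  0 < mu -> 0 < eps -> 0 < delta ->
  is_gradient f g ->
  strongly_convex mu f g ->
  lipschitz_grad (1 / eps) g ->
  is_minimizer f xs ->
  (forall k, 0 < A k) ->
  (forall k, A k <= A k.+1) ->
  let tau k := (A k.+1 - A k) / A k.+1 in
  let E k := A k * (mu / 2 * enorm (xs - z k) ^+ 2 + f (y k) - f xs) in
  (forall k, x k = (tau k / (1 + tau k)) *: z k + (1 / (1 + tau k)) *: y k) ->
  (forall k, z k.+1 - z k = tau k *: (x k - z k - (1 / mu) *: g (x k))) ->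
  (forall k, y k.+1 = x k - eps *: g (x k)) ->
  forall k,
    (E k.+1 - E k) / delta <=
      A k.+1 / delta * ((tau k) ^+ 2 / (2 * mu) - eps / 2) * enorm (g (x k)) ^+ 2
    + A k.+1 / delta * (tau k / (2 * eps) - mu / (2 * tau k)) * enorm (x k - y k) ^+ 2.
Proof.
move=> mu0 eps0 del0 _ hc hl _ A0 Amono tau E hx hz hy k.
have L0 : 0 <= 1 / eps by rewrite divr_ge0 // ltW.
have Ak0 := A0 k; have Ak1 := A0 k.+1; have Amk := Amono k.
rewrite /E /tau; set t := (A k.+1 - A k) / A k.+1.
have hA : A k = A k.+1 * (1 - t) by rewrite /t; field; rewrite gt_eqF.
have ht0 : 0 <= t by rewrite /t divr_ge0 ?subr_ge0 // ltW.
have ht1 : t <= 1.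
  by rewrite /t ler_pdivrMr // mul1r lerBlDr lerDl ltW.
have t1 : 1 + t != 0 by rewrite gt_eqF // ltr_wpDr.
set X := x k; set G := g X.
set Gm := mu^-1 *: G; set a := xs - X; set b := X - z k.
have hG : G = mu *: Gm by rewrite /Gm scalerA mulfV ?gt_eqF // scale1r.
have vy : y k - X = t *: b.
  apply/rowP => j; have := congr1 (fun v : 'rV[R]_d => v ord0 j) (hx k).
  rewrite /tau -/t -/X !mxE => ->; by field.
have v1 : xs - z k = a + b by apply/rowP => j; rewrite /a /b !mxE; ring.
have v2 : xs - z k.+1 = a + (1 - t) *: b + t *: Gm.
  apply/rowP => j; have := congr1 (fun v : 'rV[R]_d => v ord0 j) (hz k).
  rewrite /tau -/t -/X -/G -/Gm !mxE => /eqP; rewrite subr_eq => /eqP ->.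
  ring.
have v3 : y k.+1 = X + (- eps) *: G by rewrite hy scaleNr.
have v4 : X - y k = - (t *: b) by rewrite -vy opprB.
have F1 := hc X xs. rewrite -/a -/G enorm_sq in F1.
have F2 := hc X (y k). rewrite vy -/G enorm_sq in F2.
have F3 := descent (ltW mu0) L0 hc hl X ((- eps) *: G).
have F4 := grad_mono L0 hc hl b X.
rewrite -/G -v3 in F3.
rewrite v4 v1 v2 !enorm_sq.
rewrite hG in F1 F2 F3 *.
clearbody a b Gm.
rewrite !(dotvDl, dotvDr, dotvZl, dotvZr, dotvNl, dotvNr) in F1 F2 F3 *.
rewrite ?(dotvC b a) ?(dotvC Gm a) ?(dotvC Gm b) in F1 F2 F3 *.
set aa := dotv a a in F1 F2 F3 F4 *. set ab := dotv a b in F1 F2 F3 F4 *.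
set aG := dotv a Gm in F1 F2 F3 F4 *. set bb := dotv b b in F1 F2 F3 F4 *.
set bG := dotv b Gm in F1 F2 F3 F4 *. set GG := dotv Gm Gm in F1 F2 F3 F4 *.
set fX := f X in F1 F2 F3 F4 *. set fxs := f xs in F1 F2 F3 F4 *.
set fy := f (y k) in F1 F2 F3 F4 *. set fy1 := f (y k.+1) in F1 F2 F3 F4 *.
have F3' : fy1 <= fX - eps / 2 * (mu * mu * GG).
  apply: le_trans F3 _; rewrite le_eqVlt; apply/orP; left; apply/eqP.
  by field; rewrite gt_eqF.
have e1 : (t ^+ 2 / (2 * mu) - eps / 2) * (mu * (mu * GG)) = t ^+ 2 * mu / 2 * GG - eps / 2 * (mu * mu * GG).
  by field; rewrite gt_eqF.
have e2 : (t / (2 * eps) - mu / (2 * t)) * - (t * - (t * bb)) = t ^+ 3 / 2 * (1 / eps) * bb - mu * t / 2 * bb.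
  have [t0|tn0] := eqVneq t 0.
    by rewrite t0 !(mul0r, mulr0, oppr0, expr0n) /= addr0.
  by field; rewrite tn0 gt_eqF.
have core : mu/2*(aa + (1-t)*ab + t*aG + ((1-t)*ab + (1-t)*((1-t)*bb) + (1-t)*(t*bG)) + (t*aG + t*((1-t)*bG) + t*(t*GG))) + fy1 - fxs - (1-t)*(mu/2*(aa+ab+(ab+bb)) + fy - fxs) <= t ^+ 2 * mu / 2 * GG - eps / 2 * (mu * mu * GG) + (t ^+ 3 / 2 * (1 / eps) * bb - mu * t / 2 * bb).
  have t1' : 0 <= 1 - t by rewrite subr_ge0.
  have t3 : 0 <= t ^+ 3 by rewrite exprn_ge0.
  have := ler_wpM2l ht0 F1; have := ler_wpM2l t1' F2; have := ler_wpM2l t3 F4.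
  clearbody aa ab aG bb bG GG fX fxs fy fy1.
  move=> *; lra.
have hAd : 0 <= A k.+1 / delta by rewrite divr_ge0 // ltW.
have := ler_wpM2l hAd core.
rewrite -[_ * _ * (mu * (mu * GG))]mulrA -[_ * _ * - (t * - (t * bb))]mulrA e1 e2 hA.
clearbody aa ab aG bb bG GG fX fxs fy fy1.
move=> *; lra.
Qed.
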